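(* Let $\lambda\in(0,r^\alpha)$ and consider the $\lambda$-NRW on the augmented tree. For $f\in\mathcal D_X$: (i) there exists $C>0$ (depending on $f$) such that for every geodesic ray $(\mathbf x_n)_n$, $|f(\mathbf x_{n+1})-f(\mathbf x_n)|\le C(\lambda/r^\alpha)^{n/2}$ for all $n$, and hence $\lim_{n\to\infty}f(\mathbf x_n)$ exists; (ii) if two geodesic rays $(\mathbf x_n)_n$ and $(\mathbf y_n)_n$ converge to the same point of $K$, then $\lim_nf(\mathbf x_n)=\lim_nf(\mathbf y_n)$.
   Context: Let $\{S_i\}_{i=1}^N$ ($N\ge2$) be contractive similitudes of $\mathbb R^d$ with ratios $r_i\in(0,1)$ satisfying the open set condition; $K$ the self-similar set, $\alpha$ its Hausdorff dimension ($\sum r_i^\alpha=1$), $r=\min r_i$. $\Sigma^*$ finite words with empty word $\vartheta$, $S_{\mathbf x}=S_{i_1}\circ\cdots\circ S_{i_k}$, $r_{\mathbf x}=r_{i_1}\cdots r_{i_k}$. $\mathcal J_0=\{\vartheta\}$, $\mathcal J_n=\{i_1\cdots i_k:r_{i_1\cdots i_k}\le r^n<r_{i_1\cdots i_{k-1}}\}$, $X=\bigcup_n\mathcal J_n$, $|\mathbf x|=n$ on $\mathcal J_n$, parent $\mathbf x^-$ the prefix in $\mathcal J_{n-1}$. Edges: $\{\mathbf x,\mathbf x^-\}$ and horizontal $\{\mathbf x,\mathbf y\}$ ($\mathbf x\ne\mathbf y\in\mathcal J_n$, $\inf_{\xi,\eta\in K}|S_{\mathbf x}(\xi)-S_{\mathbf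 y}(\eta)|\le\gamma r^n$); $\mathbf x\sim\mathbf y$ denotes adjacency. A geodesic ray is $(\mathbf x_n)$, $\mathbf x_n\in\mathcal J_n$, each a prefix of the next; it converges to $\xi$ if $\xi\in S_{\mathbf x_n}(K)$ for all $n$. The $\lambda$-NRW conductances: $c(\mathbf x,\mathbf x^-)=r_{\mathbf x}^\alpha\lambda^{-|\mathbf x|}$, $c(\mathbf x,\mathbf y)\asymp r_{\mathbf x}^\alpha\lambda^{-|\mathbf x|}$ for horizontal edges, zero otherwise. $\mathcal E_X[f]=\frac12\sum_{\mathbf x\sim\mathbf y}c(\mathbf x,\mathbf y)(f(\mathbf x)-f(\mathbf y))^2$, $\mathcal D_X=\{f:X\to\mathbb R:\mathcal E_X[f]<\infty\}$. *)

(* Defs.v *)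
From HB Require Import structures.
From mathcomp Require Import all_boot all_order all_algebra.
From mathcomp Require Import all_classical all_reals all_analysis.
Set Implicit Arguments. Unset Strict Implicit. Unset Printing Implicit Defensive.
Import Order.TTheory GRing.Theory Num.Theory.
Import numFieldNormedType.Exports.
Local Open Scope classical_set_scope.
Local Open Scope ring_scope.

Section SelfSimilar.
Variables (R : realType) (d N : nat).

Definition edist (x y : 'rV[R]_d) : R :=
  Num.sqrt (\sum_(k < d) (x ord0 k - y ord0 k) ^+ 2).

Variable S : 'I_N -> 'rV[R]_d -> 'rV[R]_d.
Variable rs : 'I_N -> R.

Definition contractive_similitudes : Prop :=
  forall i, 0 < rs i < 1 /\
    forall x y, edist (S i x) (S i y) = rs i * edist x y.

Definition OSC : Prop :=
  exists U : set 'rV[R]_d, open U /\ U !=set0 /\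
    (forall i, S i @` U `<=` U) /\
    (forall i j, i != j -> (S i @` U) `&` (S j @` U) = set0).

Definition self_similar_set (K : set 'rV[R]_d) : Prop :=
  compact K /\ K !=set0 /\ K = \bigcup_(i in [set: 'I_N]) (S i @` K).

Definition rmin : R := \big[Num.min/1]_(i < N) rs i.

Definition word := seq 'I_N.

Definition Sw (x : word) : 'rV[R]_d -> 'rV[R]_d :=
  foldr (fun i g => S i \o g) id x.

Definition rw (x : word) : R := \prod_(i <- x) rs i.

Definition inJ (n : nat) (x : word) : Prop :=
  if n is 0 then x = [::]
  else x <> [::] /\ rw x <= rmin ^+ n /\ rmin ^+ n < rw (take (size x).-1 x).

Definition inX (x : word) : Prop := exists n, inJ n x.

Definition vedge (x y : word) : Prop :=
  exists n, inJ n.+1 x /\ inJ n y /\ prefix y x.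

Variable K : set 'rV[R]_d.
Variable gamma : R.

Definition hedge (x y : word) : Prop :=
  exists n, inJ n x /\ inJ n y /\ x <> y /\
    inf [set edist (Sw x xi) (Sw y eta) | xi in K & eta in K] <= gamma * rmin ^+ n.

Definition adj (x y : word) : Prop := vedge x y \/ vedge y x \/ hedge x y.

Variable lambda alpha : R.

Definition NRW_conductance (c : word -> word -> R) : Prop :=
  (forall x y, c x y = c y x) /\
  (forall n x y, inJ n.+1 x -> inJ n y -> prefix y x ->
      c x y = rw x `^ alpha * lambda ^- n.+1) /\
  (exists C1 C2 : R, 0 < C1 /\ 0 < C2 /\
     forall n x y, inJ n x -> hedge x y ->
       C1 * (rw x `^ alpha * lambda ^- n) <= c x y /\
       c x y <= C2 * (rw x `^ alpha * lambda ^- n)) /\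
  (forall x y, ~ adj x y -> c x y = 0).

Definition energy (c : word -> word -> R) (f : word -> R) : \bar R :=
  (2^-1)%:E * \esum_(p in [set p : word * word | adj p.1 p.2])
                 (c p.1 p.2 * (f p.1 - f p.2) ^+ 2)%:E.

Definition in_DX (c : word -> word -> R) (f : word -> R) : Prop :=
  (energy c f < +oo)%E.

Definition geodesic_ray (xs : nat -> word) : Prop :=
  forall n, inJ n (xs n) /\ prefix (xs n) (xs n.+1).

Definition ray_converges_to (xs : nat -> word) (xi : 'rV[R]_d) : Prop :=
  forall n, xi \in Sw (xs n) @` K.

End SelfSimilar.

(* Main.v *)
Require Import Defs.
From HB Require Import structures.
From mathcomp Require Import all_boot all_order all_algebra.
From mathcomp Require Import all_classical all_reals all_analysis.
From mathcomp Require Import ring lra.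
Import Order.TTheory GRing.Theory Num.Theory.
Import numFieldNormedType.Exports.
Local Open Scope classical_set_scope.
Local Open Scope ring_scope.
Set Implicit Arguments. Unset Strict Implicit.

Lemma rmin_props (R : realType) N (rs : 'I_N -> R) : (forall i, 0 < rs i < 1) ->
  [/\ 0 < rmin rs, rmin rs <= 1 & forall i, rmin rs <= rs i].
Proof.
move=> hp; split.
- rewrite /rmin; apply: (big_ind (fun x => 0 < x)) => //.
    by move=> x y hx hy; rewrite lt_min hx hy.
  by move=> i _; case/andP: (hp i).
- rewrite /rmin; apply: (big_ind (fun x => x <= 1)) => //.
    by move=> x y hx hy; rewrite ge_min hx.
  by move=> i _; case/andP: (hp i) => _ /ltW.
- move=> i; rewrite /rmin.
  have : i \in index_enum 'I_N by rewrite mem_index_enum.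
  elim: (index_enum 'I_N) => [//|j s IH].
  rewrite in_cons big_cons => /orP[/eqP ->|/IH h]; rewrite ge_min ?lexx //.
  by rewrite h orbT.
Qed.

Lemma rw_lb (R : realType) N (rs : 'I_N -> R) n x : (forall i, 0 < rs i < 1) ->
  inJ rs n x -> rmin rs ^+ n.+1 <= rw rs x.
Proof.
move=> hp; have [r0 r1 ri] := rmin_props hp.
case: n => [|n] /=.
  by move=> ->; rewrite /rw big_nil expr1.
case=> xn [_ hlt].
case/lastP: x xn hlt => [//|y a] _.
rewrite size_rcons /= -cats1 take_size_cat // => hlt.
rewrite /rw big_cat big_seq1 /= exprS mulrC.
apply: ler_pM => //; [exact: exprn_ge0 (ltW r0)| exact: ltW r0 | exact: ltW].
Qed.

Lemma abs_bound (R : realType) (D B q : R) n : 0 <= B -> 0 <= q ->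
  D ^+ 2 <= B * q ^+ n -> `|D| <= Num.sqrt B * Num.sqrt q ^+ n.
Proof.
move=> B0 q0 h.
rewrite -(ler_pXn2r (n:=2)) // ?nnegrE ?mulr_ge0 ?exprn_ge0 ?sqrtr_ge0 //.
by rewrite real_normK ?num_real // exprMn sqr_sqrtr // -exprM mulnC exprM sqr_sqrtr.
Qed.

Lemma powA (R : realType) (r alpha : R) k : 0 <= r ->
  (r `^ alpha) ^+ k = (r ^+ k) `^ alpha.
Proof.
move=> r0; rewrite -powR_mulrn ?powR_ge0 // -powR_mulrn // -!powRrM mulrC //.
Qed.

Lemma eqL1 (R : realType) (M A l : R) n : 0 < A -> 0 < l ->
  M / (A ^+ n.+2 / l ^+ n.+1) = M / A * (l / A) ^+ n * (l / A).
Proof.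
move=> A0 l0; rewrite expr_div_n !exprS.
have h1 : A ^+ n != 0 by rewrite expf_neq0 // gt_eqF.
have h2 : l ^+ n != 0 by rewrite expf_neq0 // gt_eqF.
have h3 : A != 0 by rewrite gt_eqF.
have h4 : l != 0 by rewrite gt_eqF.
by field; rewrite ?h1 ?h2 ?h3 ?h4 ?h5.
Qed.

Lemma eqL2 (R : realType) (M C A l : R) n : 0 < C -> 0 < A -> 0 < l ->
  M / (C * (A ^+ n.+1 / l ^+ n)) = M / (C * A) * (l / A) ^+ n.
Proof.
move=> C0 A0 l0; rewrite expr_div_n !exprS.
have h1 : A ^+ n != 0 by rewrite expf_neq0 // gt_eqF.
have h2 : l ^+ n != 0 by rewrite expf_neq0 // gt_eqF.
have h3 : A != 0 by rewrite gt_eqF.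
have h4 : l != 0 by rewrite gt_eqF.
have h5 : C != 0 by rewrite gt_eqF.
by field; rewrite ?h1 ?h2 ?h3 ?h4 ?h5.
Qed.

Unset Implicit Arguments.
Theorem lemma3p3 (R : realType) (d N : nat)
  (S : 'I_N -> 'rV[R]_d -> 'rV[R]_d) (rs : 'I_N -> R)
  (K : set 'rV[R]_d) (alpha gamma lambda : R)
  (c : word N -> word N -> R) (f : word N -> R) :
  (2 <= N)%N ->
  contractive_similitudes S rs ->
  OSC S ->
  self_similar_set S K ->
  0 < alpha -> \sum_(i < N) rs i `^ alpha = 1 ->
  0 < gamma ->
  0 < lambda -> lambda < rmin rs `^ alpha ->
  NRW_conductance S rs K gamma lambda alpha c ->
  in_DX S rs K gamma c f ->
  (exists C : R, 0 < C /\
     forall xs : nat -> word N, geodesic_ray rs xs ->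
       forall n : nat,
         `|f (xs n.+1) - f (xs n)| <= C * (lambda / rmin rs `^ alpha) `^ (n%:R / 2))
  /\ (forall xs : nat -> word N, geodesic_ray rs xs -> cvgn (f \o xs))
  /\ (forall (xs ys : nat -> word N) (xi : 'rV[R]_d),
        geodesic_ray rs xs -> geodesic_ray rs ys ->
        ray_converges_to S K xs xi -> ray_converges_to S K ys xi ->
        limn (f \o xs) = limn (f \o ys)).
Proof.
move=> N2 hcs _ _ a0 _ g0 l0 lA [csym [cv [[C1 [C2 [hC1 [hC2 ch]]]] c0]]] hDX.
have hp : forall i, 0 < rs i < 1 by move=> i; case: (hcs i).
have [r0 r1 ri] := rmin_props hp.
have hrwA : forall n x, inJ rs n x -> (rmin rs `^ alpha) ^+ n.+1 <= (rw rs x) `^ alpha.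
  move=> n x hx; rewrite powA; last exact: ltW.
  have h1 := rw_lb hp hx.
  have n1 : (rmin rs ^+ n.+1) \in Num.nneg by rewrite nnegrE exprn_ge0 ?ltW.
  have n2 : (rw rs x) \in Num.nneg by rewrite nnegrE (le_trans _ h1) // exprn_ge0 ?ltW.
  exact: (ge0_ler_powR (ltW a0) n1 n2 h1).
set r := rmin rs in r0 r1 ri lA hrwA *.
set A := r `^ alpha in lA hrwA *.
have A0 : 0 < A by rewrite powR_gt0.
have pt : forall x n, 0 <= rw rs x `^ alpha / lambda ^+ n.
  by move=> x n; apply: divr_ge0; [exact: powR_ge0 | exact/exprn_ge0/ltW].
have cnn : forall x y, adj S rs K gamma x y -> 0 <= c x y.
  move=> x y [[n [hx [hy hpre]]]|[[n [hy [hx hpre]]]|hh]].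
  - by rewrite (cv n x y hx hy hpre).
  - by rewrite csym (cv n y x hy hx hpre).
  - case: (hh) => n [hx _]; have [h1 _] := ch n x y hx hh.
    apply: le_trans h1.
    by apply: mulr_ge0; [exact: ltW | exact: pt].
have [M [M0 hM]] : exists M, 0 <= M /\ forall x y, adj S rs K gamma x y ->
    c x y * (f x - f y) ^+ 2 <= M.
  move: hDX; rewrite /in_DX /energy.
  set E := esum _ _.
  have E0 : (0 <= E)%E.
    by apply: esum_ge0 => p hp'; rewrite lee_fin; apply: mulr_ge0; [exact: cnn | exact: sqr_ge0].
  have hle : forall p, adj S rs K gamma p.1 p.2 ->
      ((c p.1 p.2 * (f p.1 - f p.2) ^+ 2)%:E <= E)%E.
    move=> p hp'; apply: esum_ge; exists [set p]; last by rewrite fsbig_set1.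
    by split; [exact: finite_set1 | move=> q ->].
  case: E E0 hle => [e| |] //= E0 hle hE.
  - exists e; split; first by rewrite -lee_fin.
    by move=> x y hxy; rewrite -lee_fin; exact: (hle (x, y) hxy).
  - by move: hE; rewrite gt0_muley ?lte_fin ?invr_gt0 // ltxx.

set q := lambda / A.
have q0 : 0 < q by rewrite divr_gt0.
have q1 : q < 1 by rewrite /q ltr_pdivrMr // mul1r.
set s := Num.sqrt q.
have s0 : 0 <= s := sqrtr_ge0 q.
have s1 : s < 1 by rewrite /s -sqrtr1 ltr_sqrt.
have key : forall x y L, 0 < L -> L <= c x y -> adj S rs K gamma x y ->
    (f x - f y) ^+ 2 <= M / L.
  move=> x y L L0 hL hxy; rewrite ler_pdivlMr // mulrC.
  apply: le_trans (hM x y hxy); apply: ler_wpM2r => //; exact: sqr_ge0.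
have MA0 : 0 <= M / A by apply: divr_ge0 => //; exact: ltW.
have hgeo : forall xs, geodesic_ray rs xs -> forall n,
    `|f (xs n.+1) - f (xs n)| <= Num.sqrt (M / A) * s ^+ n.
  move=> xs hxs n.
  have [hx0 hpre] := hxs n; have [hx1 _] := hxs n.+1.
  have hadj : adj S rs K gamma (xs n.+1) (xs n) by left; exists n.
  apply: abs_bound => //; first exact: ltW.
  have L0 : 0 < A ^+ n.+2 / lambda ^+ n.+1 by rewrite divr_gt0 ?exprn_gt0.
  apply: le_trans (key _ _ _ L0 _ hadj) _.
    rewrite (cv n _ _ hx1 hx0 hpre); apply: ler_wpM2r.
      by rewrite invr_ge0 exprn_ge0 ?ltW.
    exact: hrwA.
  rewrite eqL1 //.
  apply: ler_piMr; last exact: ltW.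
  by apply: mulr_ge0 => //; exact: exprn_ge0 (ltW q0).
have cv2 : forall xs, geodesic_ray rs xs -> cvgn (f \o xs).
  move=> xs hxs.
  have -> : f \o xs = (fun n => f (xs 0%N) + series (telescope (f \o xs)) n).
    by apply/funext => n; exact: eq_sum_telescope.
  apply: (is_cvgD (f := cst (f (xs 0%N))) (g := series (telescope (f \o xs)))).
    exact: is_cvg_cst.
  apply: normed_cvg.
  apply: (series_le_cvg (u_ := fun n => `|telescope (f \o xs) n|)
            (v_ := geometric (Num.sqrt (M / A)) s)).
  - by move=> n; exact: normr_ge0.
  - by move=> n; rewrite /=; apply: mulr_ge0; [exact: sqrtr_ge0 | exact: exprn_ge0].
  - by move=> n; rewrite /= /telescope /=; exact: hgeo.
  - by apply: is_cvg_geometric_series; rewrite ger0_norm.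
split.
  exists (Num.sqrt (M / A) + 1); split.
    by apply: ltr_wpDl; [exact: sqrtr_ge0 | exact: ltr01].
  move=> xs hxs n.
  have eqs : q `^ (n%:R / 2) = s ^+ n.
    by rewrite (mulrC n%:R) powRrM powR12_sqrt ?ltW // powR_mulrn // sqrtr_ge0.
  rewrite eqs; apply: le_trans (hgeo xs hxs n) _.
  by apply: ler_wpM2r; [exact: exprn_ge0 | rewrite lerDl ler01].
split; first exact: cv2.
move=> xs ys xi hxs hys hcx hcy.
have CA0 : 0 <= M / (C1 * A) by apply: divr_ge0 => //; apply: mulr_ge0; exact: ltW.
have hb : forall n, `|f (xs n) - f (ys n)| <= Num.sqrt (M / (C1 * A)) * s ^+ n.
  move=> n; have [hx _] := hxs n; have [hy _] := hys n.
  have [-> | hne] := eqVneq (xs n) (ys n).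
    rewrite subrr normr0; apply: mulr_ge0; [exact: sqrtr_ge0 | exact: exprn_ge0].
  have hh : hedge S rs K gamma (xs n) (ys n).
    exists n; split => //; split => //; split; first exact/eqP.
    move: (hcx n) (hcy n); rewrite !inE => -[a Ka ea] [b Kb eb].
    pose E := [set Defs.edist (Sw S (xs n) u) (Sw S (ys n) v) | u in K & v in K].
    change (inf E <= gamma * rmin rs ^+ n).
    have hlb : has_lbound E.
      by exists 0; move=> z [a' _ [b' _ <-]]; exact: sqrtr_ge0.
    have hmem : E (Defs.edist xi xi) by exists a => //; exists b => //; rewrite ea eb.
    apply: le_trans (ge_inf hlb hmem) _.
    rewrite /Defs.edist big1 ?sqrtr0; last by move=> k _; rewrite subrr expr2 mul0r.
    by apply: mulr_ge0; [exact: ltW | exact: exprn_ge0 (ltW r0)].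
  have L0 : 0 < C1 * (A ^+ n.+1 / lambda ^+ n).
    by apply: mulr_gt0 => //; rewrite divr_gt0 ?exprn_gt0.
  have hL : C1 * (A ^+ n.+1 / lambda ^+ n) <= c (xs n) (ys n).
    have [h1 _] := ch n _ _ hx hh; apply: le_trans h1.
    apply: ler_wpM2l; first exact: ltW.
    apply: ler_wpM2r; first by rewrite invr_ge0 exprn_ge0 ?ltW.
    exact: hrwA.
  apply: abs_bound => //; first exact: ltW.
  apply: le_trans (key _ _ _ L0 hL (or_intror (or_intror hh))) _.
  by rewrite eqL2.
have ha : (fun n => f (xs n) - f (ys n)) @ \oo --> 0.
  apply: norm_cvg0.
  apply: (@squeeze_cvgr _ _ _ _ (fun=> 0) (geometric (Num.sqrt (M / (C1 * A))) s)).
  - by apply: nearW => n; rewrite normr_ge0 /=; exact: hb.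
  - exact: cvg_cst.
  - by apply: cvg_geometric; rewrite ger0_norm.
have := limB (F := \oo) (cv2 xs hxs) (cv2 ys hys).
rewrite (cvg_lim _ ha) // => h.
by apply/eqP; rewrite -subr_eq0 -h.
Qed.
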